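(* Let $\epsilon, b, c \in \mathbb{C}$ with $\epsilon\neq 0$ and $1-\tfrac13\epsilon^2 b\neq 0$. Consider the map $\Phi:(x,y)\mapsto(\widetilde x,\widetilde y)$ of $\mathbb{C}^2$ defined implicitly by the system (linear in $(\widetilde x,\widetilde y)$, hence defining a birational map) \[ \frac{\widetilde x - x}{\epsilon}=x\widetilde y+\widetilde x y, \qquad \frac{\widetilde y-y}{\epsilon}= b+c(1-\epsilon^2b)(x+\widetilde x)+\big(1-\epsilon^2c^2(2-\epsilon^2b)\big)x \widetilde x -(2-\epsilon^2b)\,y \widetilde y . \] Set \[ p=\frac{(1-\epsilon^2 b)(1-\frac{1}{2}\epsilon^2 b)}{1-\frac{1}{3}\epsilon^2b},\qquad a_1=1-\epsilon^2b-\tfrac{4}{3}\epsilon^2c^2p,\qquad c_1=cp, \] \[ m_1=1+\epsilon y+\epsilon(1-\epsilon c)x,\quad m_2=1+\epsilon y-\epsilon(1+\epsilon c)x,\quad m_3=1-\epsilon y+\epsilon(1-\epsilon c)x,\quad m_4=1-\epsilon y-\epsilon(1+\epsilon c)x . \] Then $\Phi$ is integrable in the sense that the rational function \[ H(x,y;\epsilon)=\frac{x^2\big((1-\frac{1}{2}\epsilon^2b)y^2-\frac{1}{4}a_1x^2-\frac{2}{3}c_1x-\frac{1}{2}b\big)}{m_1(x,y)\,m_2(x,y)\,m_3(x,y)\,m_4(x,y)} \] satisfies $H(\widetilde x,\widetilde y;\epsilon)=H(x,y;\epsilon)$ for all $(x,y)$ at which $\Phi$ and both sides are defined.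
   Context: This map is a modification of the Kahan discretization of the planar system $\dot x=2xy$, $\dot y=b+2cx+x^2-2y^2$ (whose standard Kahan discretization is $(\widetilde x-x)/\epsilon=\widetilde x y+x\widetilde y$, $(\widetilde y-y)/\epsilon=b+c(x+\widetilde x)+x\widetilde x-2y\widetilde y$). An integral of motion of a map $\Phi$ is a (nonconstant) function $H$ with $H\circ\Phi=H$. *)

(* Defs.v *)
(* The complex numbers are modelled by an arbitrary
   numClosedFieldType (algebraically closed field of characteristic 0 with
   the numeric structure; C is such a field, algC is another instance). *)
From HB Require Import structures.
From mathcomp Require Import all_boot all_order all_algebra.
Set Implicit Arguments. Unset Strict Implicit. Unset Printing Implicit Defensive.
Import Order.TTheory GRing.Theory Num.Theory.
Local Open Scope ring_scope.

Section Defs.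
Variable C : numClosedFieldType.

Definition kahan_eqs (eps b c x y xt yt : C) : Prop :=
  (xt - x) / eps = x * yt + xt * y /\
  (yt - y) / eps =
    b + c * (1 - eps ^+ 2 * b) * (x + xt)
      + (1 - eps ^+ 2 * c ^+ 2 * (2 - eps ^+ 2 * b)) * x * xt
      - (2 - eps ^+ 2 * b) * y * yt.

(* Phi is defined at (x,y) with value (xt,yt): (xt,yt) is the unique
   solution of the (linear in (xt,yt)) system. *)
Definition kahan_map_at (eps b c x y xt yt : C) : Prop :=
  kahan_eqs eps b c x y xt yt /\
  (forall xt' yt', kahan_eqs eps b c x y xt' yt' -> xt' = xt /\ yt' = yt).

Definition p_coef (eps b : C) : C :=
  (1 - eps ^+ 2 * b) * (1 - 2^-1 * eps ^+ 2 * b) / (1 - 3^-1 * eps ^+ 2 * b).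
Definition a1_coef (eps b c : C) : C :=
  1 - eps ^+ 2 * b - 4 / 3 * eps ^+ 2 * c ^+ 2 * p_coef eps b.
Definition c1_coef (eps b c : C) : C := c * p_coef eps b.

Definition m1 (eps c x y : C) : C := 1 + eps * y + eps * (1 - eps * c) * x.
Definition m2 (eps c x y : C) : C := 1 + eps * y - eps * (1 + eps * c) * x.
Definition m3 (eps c x y : C) : C := 1 - eps * y + eps * (1 - eps * c) * x.
Definition m4 (eps c x y : C) : C := 1 - eps * y - eps * (1 + eps * c) * x.

Definition H_den (eps c x y : C) : C :=
  m1 eps c x y * m2 eps c x y * m3 eps c x y * m4 eps c x y.

Definition H_num (eps b c x y : C) : C :=
  x ^+ 2 * ((1 - 2^-1 * eps ^+ 2 * b) * y ^+ 2 - 4^-1 * a1_coef eps b c * x ^+ 2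
            - 2 / 3 * c1_coef eps b c * x - 2^-1 * b).

Definition H (eps b c x y : C) : C := H_num eps b c x y / H_den eps c x y.
End Defs.

(* Main.v *)
Require Import Defs.
From HB Require Import structures.
From mathcomp Require Import all_boot all_order all_algebra.
From mathcomp Require Import ring lra.
Import Order.TTheory GRing.Theory Num.Theory.
Local Open Scope ring_scope.

Section Aux.
Variable C : numClosedFieldType.
Implicit Types eps b c x y : C.

Definition Dlt eps b c x y : C :=
  (1 - eps * y) * (1 + eps * (2 - eps ^+ 2 * b) * y)
  - eps ^+ 2 * x * (c * (1 - eps ^+ 2 * b) + (1 - eps ^+ 2 * c ^+ 2 * (2 - eps ^+ 2 * b)) * x).
Definition Yf eps b c x y : C :=
  (1 - eps * y) * (y + eps * (b + c * (1 - eps ^+ 2 * b) * x))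
  + eps * x * (c * (1 - eps ^+ 2 * b) + (1 - eps ^+ 2 * c ^+ 2 * (2 - eps ^+ 2 * b)) * x).
Definition l0 eps b c x y : C :=
  1 + 3 * eps * y + eps ^+ 2 * b + eps ^+ 2 * c * x - eps ^+ 3 * b * y - eps ^+ 4 * b * c * x.
Definition l2 eps b c x y : C :=
  1 + eps ^+ 4 * b * c * x + eps ^+ 3 * b * y - eps ^+ 2 * b - 3 * eps ^+ 2 * c * x
  + 2 * eps * x - eps * y.
Definition l3 eps b c x y : C :=
  1 + eps ^+ 4 * b * c * x + eps ^+ 3 * b * y - eps ^+ 2 * b - 3 * eps ^+ 2 * c * x
  - 2 * eps * x - eps * y.
Definition Qf eps b c x y : C :=
  (1 - 2^-1 * eps ^+ 2 * b) * y ^+ 2 - 4^-1 * a1_coef eps b c * x ^+ 2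
            - 2 / 3 * c1_coef eps b c * x - 2^-1 * b.

Section L.
Variables eps b c x y : C.
Hypothesis hD : Dlt eps b c x y != 0.
Let X := x * l0 eps b c x y / Dlt eps b c x y.
Let Y := Yf eps b c x y / Dlt eps b c x y.
Let D := Dlt eps b c x y.

Lemma P1 : D + eps * Yf eps b c x y + eps * (1 - eps * c) * (x * l0 eps b c x y) = m3 eps c x y * l0 eps b c x y.
Proof. rewrite /D /Dlt /Yf /l0 /m3. ring. Qed.
Lemma P2 : D + eps * Yf eps b c x y - eps * (1 + eps * c) * (x * l0 eps b c x y) = m4 eps c x y * l0 eps b c x y.
Proof. rewrite /D /Dlt /Yf /l0 /m4. ring. Qed.
Lemma P3 : D - eps * Yf eps b c x y + eps * (1 - eps * c) * (x * l0 eps b c x y) = m2 eps c x y * l2 eps b c x y.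
Proof. rewrite /D /Dlt /Yf /l0 /m2 /l2. ring. Qed.
Lemma P4 : D - eps * Yf eps b c x y - eps * (1 + eps * c) * (x * l0 eps b c x y) = m1 eps c x y * l3 eps b c x y.
Proof. rewrite /D /Dlt /Yf /l0 /m1 /l3. ring. Qed.

Lemma Lm1 : m1 eps c X Y = m3 eps c x y * l0 eps b c x y / D.
Proof. rewrite -P1 /X /Y /m1 -/D; field; exact: hD. Qed.
Lemma Lm2 : m2 eps c X Y = m4 eps c x y * l0 eps b c x y / D.
Proof. rewrite -P2 /X /Y /m2 -/D; field; exact: hD. Qed.
Lemma Lm3 : m3 eps c X Y = m2 eps c x y * l2 eps b c x y / D.
Proof. rewrite -P3 /X /Y /m3 -/D; field; exact: hD. Qed.
Lemma Lm4 : m4 eps c X Y = m1 eps c x y * l3 eps b c x y / D.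
Proof. rewrite -P4 /X /Y /m4 -/D; field; exact: hD. Qed.

Hypothesis h3 : 1 - 3^-1 * eps ^+ 2 * b != 0.
Lemma PQ : (1 - 2^-1 * eps ^+ 2 * b) * Yf eps b c x y ^+ 2
   - 4^-1 * a1_coef eps b c * (x * l0 eps b c x y) ^+ 2
   - 2 / 3 * c1_coef eps b c * (x * l0 eps b c x y) * D - 2^-1 * b * D ^+ 2
   = Qf eps b c x y * l2 eps b c x y * l3 eps b c x y.
Proof.
have n3 : (3:C) != 0 by rewrite pnatr_eq0.
rewrite /D /Qf /a1_coef /c1_coef /p_coef /l0 /l2 /l3 /Yf /Dlt.
field.
apply: (contraNneq _ h3) => Z; apply/eqP.
transitivity (3^-1 * (3 - eps ^+ 2 * b)); first by field.
by rewrite Z mulr0.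
Qed.
Lemma LQ : Qf eps b c X Y = Qf eps b c x y * l2 eps b c x y * l3 eps b c x y / D ^+ 2.
Proof.
rewrite -PQ /X /Y -/D /Qf.
field.
exact: hD.
Qed.
End L.
End Aux.
Arguments Dlt {C}. Arguments Yf {C}. Arguments l0 {C}. Arguments l2 {C}. Arguments l3 {C}. Arguments Qf {C}.
Arguments Lm1 {C eps b c x y}. Arguments Lm2 {C eps b c x y}. Arguments Lm3 {C eps b c x y}. Arguments Lm4 {C eps b c x y}. Arguments LQ {C eps b c x y}.

Theorem theorem2 (C : numClosedFieldType) (eps b c x y xt yt : C) :
  eps != 0 ->
  1 - 3^-1 * eps ^+ 2 * b != 0 ->
  kahan_map_at eps b c x y xt yt ->
  H_den eps c x y != 0 ->
  H_den eps c xt yt != 0 ->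
  H eps b c xt yt = H eps b c x y.
Proof.
move=> he h3 [[E1 E2] U] hD hDt.
have n2 : (2:C) != 0 by rewrite pnatr_eq0.
have n3 : (3:C) != 0 by rewrite pnatr_eq0.
have n4 : (4:C) != 0 by rewrite pnatr_eq0.
set q : C := 1 - eps ^+ 2 * b.
set s : C := 2 - eps ^+ 2 * b.
set r : C := 1 - eps ^+ 2 * c ^+ 2 * s.
set a11 : C := 1 - eps * y.
set a12 : C := - (eps * x).
set a21 : C := - (eps * (c * q + r * x)).
set a22 : C := 1 + eps * s * y.
set r2 : C := y + eps * (b + c * q * x).
have F1 : a11 * xt + a12 * yt = x.
  move: E1; rewrite /a11 /a12 => E1.
  have : xt - x = eps * (x * yt + xt * y) by rewrite -E1; field.
  move=> E; apply/eqP; rewrite -subr_eq0; apply/eqP.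
  transitivity ((xt - x) - eps * (x * yt + xt * y)); first ring.
  by rewrite E subrr.
have F2 : a21 * xt + a22 * yt = r2.
  move: E2; rewrite /a21 /a22 /r2 /q /r /s => E2.
  have : yt - y = eps * (b + c * (1 - eps ^+ 2 * b) * (x + xt)
      + (1 - eps ^+ 2 * c ^+ 2 * (2 - eps ^+ 2 * b)) * x * xt
      - (2 - eps ^+ 2 * b) * y * yt) by rewrite -E2; field.
  move=> E; apply/eqP; rewrite -subr_eq0; apply/eqP.
  transitivity ((yt - y) - eps * (b + c * (1 - eps ^+ 2 * b) * (x + xt)
      + (1 - eps ^+ 2 * c ^+ 2 * (2 - eps ^+ 2 * b)) * x * xt
      - (2 - eps ^+ 2 * b) * y * yt)); first ring.
  by rewrite E subrr.
set Dl : C := a11 * a22 - a12 * a21.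
have hDl : Dl != 0.
  apply/negP => /eqP D0.
  have back : forall u v, a11 * u + a12 * v = x -> a21 * u + a22 * v = r2 ->
      kahan_eqs eps b c x y u v.
    move=> u v G1 G2; split.
    - have E : u - x = eps * (x * v + u * y).
        apply/eqP; rewrite -subr_eq0; apply/eqP.
        transitivity (u - (a11 * u + a12 * v) - eps * (x * v + u * y)); first by rewrite G1.
        rewrite /a11 /a12; ring.
      by rewrite E; field.
    - have E : v - y = eps * (b + c * (1 - eps ^+ 2 * b) * (x + u)
        + (1 - eps ^+ 2 * c ^+ 2 * (2 - eps ^+ 2 * b)) * x * u
        - (2 - eps ^+ 2 * b) * y * v).
        apply/eqP; rewrite -subr_eq0; apply/eqP.
        transitivity (v - y - (a21 * u + a22 * v - r2) - eps * (b + c * (1 - eps ^+ 2 * b) * (x + u)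
          + (1 - eps ^+ 2 * c ^+ 2 * (2 - eps ^+ 2 * b)) * x * u
          - (2 - eps ^+ 2 * b) * y * v)); first by rewrite G2 subrr subr0.
        rewrite /a21 /a22 /r2 /r /q /s; ring.
      by rewrite E; field.
  have [V1 V2] : xt - a12 = xt /\ yt + a11 = yt.
    apply: U; apply: back.
      transitivity (a11 * xt + a12 * yt); first ring. exact: F1.
    transitivity (a21 * xt + a22 * yt + Dl); first (rewrite /Dl; ring).
    by rewrite D0 addr0 F2.
  have [W1 W2] : xt + a22 = xt /\ yt - a21 = yt.
    apply: U; apply: back.
      transitivity (a11 * xt + a12 * yt + Dl); first (rewrite /Dl; ring).
      by rewrite D0 addr0 F1.
    transitivity (a21 * xt + a22 * yt); first ring. exact: F2.
  have A11 : a11 = 0 by apply: (addrI yt); rewrite V2 addr0.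
  have A22 : a22 = 0 by apply: (addrI xt); rewrite W1 addr0.
  suff Z : 1 - 3^-1 * eps ^+ 2 * b = 0 by rewrite Z eqxx in h3.
  transitivity (3^-1 * (a22 + s * a11)); first by rewrite /a22 /a11 /s; field.
  by rewrite A11 A22 mulr0 addr0 mulr0.
have hxt : xt = (x * a22 - a12 * r2) / Dl.
  apply: (mulIf hDl); rewrite divfK //. rewrite -F1 -F2 /Dl; ring.
have hyt : yt = (a11 * r2 - a21 * x) / Dl.
  apply: (mulIf hDl); rewrite divfK //. rewrite -F1 -F2 /Dl; ring.
have eD : Dl = Dlt eps b c x y by rewrite /Dl /Dlt /a11 /a12 /a21 /a22 /q /r /s; ring.
have hD' : Dlt eps b c x y != 0 by rewrite -eD.
have hxt' : xt = x * l0 eps b c x y / Dlt eps b c x y.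
  by rewrite hxt -eD; congr (_ / _); rewrite /a22 /a12 /r2 /l0 /q /s; ring.
have hyt' : yt = Yf eps b c x y / Dlt eps b c x y.
  by rewrite hyt -eD; congr (_ / _); rewrite /a11 /a21 /r2 /Yf /q /r /s; ring.
clear hxt hyt.
have eN : forall u v, H_num eps b c u v = u ^+ 2 * Qf eps b c u v by [].
have eD0 : forall u v, H_den eps c u v = m1 eps c u v * m2 eps c u v * m3 eps c u v * m4 eps c u v by [].
rewrite /H hxt' hyt' in hDt *.
rewrite !eN !eD0 in hDt hD *.
rewrite (Lm1 hD') (Lm2 hD') (Lm3 hD') (Lm4 hD') (LQ hD' h3) in hDt *.
move: hD hDt hD'.
generalize (m1 eps c x y) (m2 eps c x y) (m3 eps c x y) (m4 eps c x y)
  (l0 eps b c x y) (l2 eps b c x y) (l3 eps b c x y) (Dlt eps b c x y) (Qf eps b c x y).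
move=> M1 M2 M3 M4 L0 L2 L3 DD QQ hM hMt hDD.
have hL0 : L0 != 0 by apply: (contraNneq _ hMt) => ->; rewrite !(mulr0, mul0r).
have hL2 : L2 != 0 by apply: (contraNneq _ hMt) => ->; rewrite !(mulr0, mul0r).
have hL3 : L3 != 0 by apply: (contraNneq _ hMt) => ->; rewrite !(mulr0, mul0r).
have hM1 : M1 != 0 by apply: (contraNneq _ hM) => ->; rewrite !(mulr0, mul0r).
have hM2 : M2 != 0 by apply: (contraNneq _ hM) => ->; rewrite !(mulr0, mul0r).
have hM3 : M3 != 0 by apply: (contraNneq _ hM) => ->; rewrite !(mulr0, mul0r).
have hM4 : M4 != 0 by apply: (contraNneq _ hM) => ->; rewrite !(mulr0, mul0r).
by field; rewrite hL0 hL2 hL3 hM1 hM2 hM3 hM4 hDD.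
Qed.
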